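(* Let $\mathbb{H}$ be a real Hilbert space (of dimension at least $2$) and $\mathbb{Y}$ a two-dimensional smooth and strictly convex real Banach space. Let $T\in\mathbb{L}(\mathbb{H},\mathbb{Y})$ be of rank one with $\|T\|=1$. Then $M_T=\{\pm x\}$ for some $x\in S_{\mathbb{H}}$. Moreover, $T$ is an extreme contraction if and only if $(x,Tx)$ is not a CPP.
   Context: $M_T=\{x\in S_{\mathbb{H}}:\|Tx\|=\|T\|\}$. A norm one $T$ is an extreme contraction if it is an extreme point of the closed unit ball of $\mathbb{L}(\mathbb{H},\mathbb{Y})$. $B(x,r)=\{u:\|u-x\|<r\}$. $x\perp_B y$ means $\|x+\lambda y\|\ge\|x\|$ for all real $\lambda$; $x^\perp=\{y:x\perp_By\}$. For $x\in S_{\mathbb{H}}$, $y\in S_{\mathbb{Y}}$, $(x,y)$ is a CPP if there exist $r>0,\mu>0$ such that for all $z\in x^\perp\cap S_{\mathbb{H}}$, all $w\in y^\perp\cap S_{\mathbb{Y}}$ and all $a,b\in\mathbb{R}$, $ax+bz\in B(x,r)\cap S_{\mathbb{H}}$ implies $\|ay+b\mu w\|\le1$. *)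

(* Defs.v *)
From HB Require Import structures.
From mathcomp Require Import all_boot all_order all_algebra.
From mathcomp Require Import all_classical all_reals all_analysis.
Set Implicit Arguments. Unset Strict Implicit. Unset Printing Implicit Defensive.
Import Order.TTheory GRing.Theory Num.Theory.
Import numFieldNormedType.Exports.
Local Open Scope classical_set_scope.
Local Open Scope ring_scope.

Section Defs.
Variable R : realType.

Definition is_inner_product (H : normedModType R) (ip : H -> H -> R) : Prop :=
  (forall x y, ip x y = ip y x) /\
  (forall (a : R) (x y z : H), ip (a *: x + y) z = a * ip x z + ip y z) /\
  (forall x, `|x| = Num.sqrt (ip x x)).

Definition dim_ge2 (V : normedModType R) : Prop :=
  exists u v : V, forall a b : R, a *: u + b *: v = 0 -> a = 0 /\ b = 0.

Definition dim_eq2 (V : normedModType R) : Prop :=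
  exists e1 e2 : V,
    (forall a b : R, a *: e1 + b *: e2 = 0 -> a = 0 /\ b = 0) /\
    (forall y : V, exists a b : R, y = a *: e1 + b *: e2).

Definition strictly_convex (V : normedModType R) : Prop :=
  forall x y : V, `|x| = 1 -> `|y| = 1 -> x != y -> `|(2%:R^-1) *: (x + y)| < 1.

Definition support_functional (V : normedModType R) (x : V) (f : V -> R) : Prop :=
  linear f /\ (forall y, `|f y| <= `|y|) /\ f x = 1.

Definition smooth (V : normedModType R) : Prop :=
  forall x : V, `|x| = 1 ->
    exists f, support_functional x f /\
      forall g, support_functional x g -> forall y, g y = f y.

Definition bounded_op (H Y : normedModType R) (T : H -> Y) : Prop :=
  linear T /\ exists k : R, forall x, `|T x| <= k * `|x|.

Definition opnorm (H Y : normedModType R) (T : H -> Y) : R :=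
  sup [set `|T x| | x in [set x : H | `|x| <= 1]].

Definition rank_one (H Y : normedModType R) (T : H -> Y) : Prop :=
  (exists y0 : Y, y0 != 0 /\ forall x, exists c : R, T x = c *: y0) /\
  (exists x, T x != 0).

Definition MT (H Y : normedModType R) (T : H -> Y) : set H :=
  [set x | `|x| = 1 /\ `|T x| = opnorm T].

Definition in_unit_ball_op (H Y : normedModType R) (A : H -> Y) : Prop :=
  bounded_op A /\ opnorm A <= 1.

Definition extreme_contraction (H Y : normedModType R) (T : H -> Y) : Prop :=
  in_unit_ball_op T /\ opnorm T = 1 /\
  forall (A B : H -> Y) (t : R), in_unit_ball_op A -> in_unit_ball_op B ->
    0 < t < 1 -> (forall x, T x = t *: A x + (1 - t) *: B x) ->
    forall x, A x = T x /\ B x = T x.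

Definition bj_orth (V : normedModType R) (x y : V) : Prop :=
  forall l : R, `|x| <= `|x + l *: y|.

Definition sphere (V : normedModType R) : set V := [set x | `|x| = 1].

Definition oball (V : normedModType R) (x : V) (r : R) : set V :=
  [set u | `|u - x| < r].

Definition CPP (H Y : normedModType R) (x : H) (y : Y) : Prop :=
  `|x| = 1 /\ `|y| = 1 /\
  exists r mu : R, 0 < r /\ 0 < mu /\
    forall (z : H) (w : Y) (a b : R),
      bj_orth x z -> `|z| = 1 -> bj_orth y w -> `|w| = 1 ->
      (oball x r `&` @sphere H) (a *: x + b *: z) ->
      `|a *: y + (b * mu) *: w| <= 1.

End Defs.

(* Main.v *)
Require Import Defs.
From HB Require Import structures.
From mathcomp Require Import all_boot all_order all_algebra.
From mathcomp Require Import all_classical all_reals all_analysis.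
From mathcomp Require Import ring lra.
Set Implicit Arguments. Unset Strict Implicit. Unset Printing Implicit Defensive.
Import Order.TTheory GRing.Theory Num.Theory.
Import numFieldNormedType.Exports.
Local Open Scope classical_set_scope.
Local Open Scope ring_scope.

Section IP.
Variable R : realType.
Variable H : normedModType R.
Variable ip : H -> H -> R.
Hypothesis hip : is_inner_product ip.

Lemma ipC x y : ip x y = ip y x.
Proof. by case: hip. Qed.
Lemma ipZDl a x y z : ip (a *: x + y) z = a * ip x z + ip y z.
Proof. by case: hip => _ []. Qed.
Lemma ip0l z : ip 0 z = 0.
Proof. have := ipZDl 1 0 0 z. rewrite scaler0 addr0 mul1r. lra. Qed.
Lemma ipDl x y z : ip (x + y) z = ip x z + ip y z.
Proof. by rewrite -[x]scale1r ipZDl mul1r scale1r. Qed.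
Lemma ipZl a x z : ip (a *: x) z = a * ip x z.
Proof. by rewrite -[a *: x]addr0 ipZDl ip0l addr0. Qed.
Lemma ipNl x z : ip (- x) z = - ip x z.
Proof. by rewrite -scaleN1r ipZl mulN1r. Qed.
Lemma ipDr x y z : ip z (x + y) = ip z x + ip z y.
Proof. by rewrite ipC ipDl !(ipC z). Qed.
Lemma ipZr a x z : ip z (a *: x) = a * ip z x.
Proof. by rewrite ipC ipZl ipC. Qed.
Lemma ipNr x z : ip z (- x) = - ip z x.
Proof. by rewrite ipC ipNl ipC. Qed.
Lemma ipBl x y z : ip (x - y) z = ip x z - ip y z.
Proof. by rewrite ipDl ipNl. Qed.
Lemma ipBr x y z : ip z (x - y) = ip z x - ip z y.
Proof. by rewrite ipDr ipNr. Qed.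

Lemma ip_norm2 (x : H) : `|x| ^+ 2 = ip x x.
Proof.
case: hip => _ [_ hn].
have [->|x0] := eqVneq x 0; first by rewrite normr0 ip0l expr0n.
have : 0 < `|x| by rewrite normr_gt0.
rewrite hn => h. rewrite sqr_sqrtr //.
by move: h; rewrite sqrtr_gt0 => /ltW.
Qed.

Lemma ip_ge0 x : 0 <= ip x x.
Proof. by rewrite -ip_norm2 sqr_ge0. Qed.

Lemma norm_comb2 a (b : R) (x z : H) : 
  `|a *: x + b *: z| ^+ 2 = a ^+ 2 * `|x| ^+ 2 + 2 * a * b * ip x z + b ^+ 2 * `|z| ^+ 2.
Proof.
rewrite !ip_norm2 !ipDl !ipDr !ipZl !ipZr (ipC z x).
ring.
Qed.


Lemma parallelogram (x y : H) : `|x + y| ^+ 2 + `|x - y| ^+ 2 = 2 * `|x| ^+ 2 + 2 * `|y| ^+ 2.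
Proof. rewrite !ip_norm2 !ipDl !ipDr !ipNl !ipNr (ipC y x). ring. Qed.

Lemma bj_ip (x z : H) : `|x| = 1 -> `|z| = 1 -> bj_orth x z -> ip x z = 0.
Proof.
move=> hx hz hb. set c := ip x z.
have h := hb (- c). rewrite hx in h.
have e := norm_comb2 1 (-c) x z. rewrite scale1r hx hz -/c in e.
have N0 : 0 <= `|x + (-c) *: z| by [].
have : c ^+ 2 <= 0 by nra.
move=> hc; apply/eqP; rewrite -sqrf_eq0 eq_le hc sqr_ge0 //.
Qed.

Lemma ip_bj (x z : H) : ip x z = 0 -> bj_orth x z.
Proof.
move=> h0 l. have e := norm_comb2 1 l x z. rewrite scale1r h0 in e.
have N0 : 0 <= `|x + l *: z| by [].
have X0 : 0 <= `|x| by [].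
have : `|x| ^+ 2 <= `|x + l *: z| ^+ 2 by rewrite e; nra.
move=> h. nra.
Qed.


Lemma bessel (u z x : H) : `|u| = 1 -> `|z| = 1 -> ip u z = 0 ->
  ip x u ^+ 2 + ip x z ^+ 2 <= `|x| ^+ 2.
Proof.
move=> hu hz huz.
have huu : ip u u = 1 by rewrite -ip_norm2 hu expr1n.
have hzz : ip z z = 1 by rewrite -ip_norm2 hz expr1n.
have := ip_ge0 (x - ip x u *: u - ip x z *: z).
rewrite !ipDl !ipDr !ipNl !ipNr !ipZl !ipZr huu hzz huz (ipC z u) huz (ipC u x) (ipC z x) ip_norm2.
nra.
Qed.

Lemma orth_unit (u z : H) a b : `|u| = 1 -> `|z| = 1 -> ip u z = 0 ->
  `|a *: u + b *: z| ^+ 2 = a ^+ 2 + b ^+ 2.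
Proof. by move=> hu hz huz; rewrite norm_comb2 hu hz huz; ring. Qed.

End IP.
Section Riesz.
Variable R : realType.
Variable H : completeNormedModType R.
Variable ip : H -> H -> R.
Hypothesis hip : is_inner_product ip.
Variable phi : H -> R.
Hypothesis phiL : forall a x y, phi (a *: x + y) = a * phi x + phi y.
Hypothesis phiB : forall x, `|phi x| <= `|x|.
Hypothesis phiS : forall e, 0 < e -> exists x, `|x| <= 1 /\ 1 - e < phi x.

Let phi0 : phi 0 = 0.
Proof. have := phiL 1 0 0. rewrite scaler0 addr0 mul1r. lra. Qed.
Let phiD x y : phi (x + y) = phi x + phi y.
Proof. by rewrite -[x]scale1r phiL mul1r scale1r. Qed.
Let phiZ a x : phi (a *: x) = a * phi x.
Proof. by rewrite -[a *: x]addr0 phiL phi0 addr0. Qed.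
Let phiN x : phi (- x) = - phi x.
Proof. by rewrite -scaleN1r phiZ mulN1r. Qed.
Let phiBD x y : phi (x - y) = phi x - phi y.
Proof. by rewrite phiD phiN. Qed.
Let phile x : phi x <= `|x|.
Proof. exact: le_trans (ler_norm _) (phiB x). Qed.

Definition ee (n : nat) : R := n.+1%:R^-1.

Lemma riesz : exists u : H, `|u| = 1 /\ forall x, phi x = ip x u.
Proof.
have /choice [s hs] : forall n : nat, exists x : H, `|x| <= 1 /\ 1 - ee n < phi x.
  by move=> n; apply: phiS; rewrite invr_gt0 ltr0Sn.
have einv n : 0 < ee n by rewrite /ee invr_gt0 ltr0Sn.
have einv1 n : ee n <= 1 by rewrite /ee; rewrite invf_le1 ?ltr0Sn // ler1n.
have est n m : `|s n - s m| ^+ 2 <= 4 * (ee n + ee m).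
  have [hn1 hn2] := hs n; have [hm1 hm2] := hs m.
  have hp := parallelogram hip (s n) (s m).
  have q1 : phi (s n + s m) <= `|s n + s m| := phile _.
  rewrite phiD in q1.
  set d := ee n + ee m.
  have d0 : 0 < d by rewrite /d; have := einv n; have := einv m; lra.
  have d2 : d <= 2 by rewrite /d; have := einv1 n; have := einv1 m; lra.
  have hP : 2 - d <= `|s n + s m|.
    by rewrite /d; lra.
  have hP2 : (2 - d) ^+ 2 <= `|s n + s m| ^+ 2.
    by rewrite ler_pXn2r // ?nnegrE; lra.
  have ha : `|s n| ^+ 2 <= 1 by rewrite expr_le1 //.
  have hb : `|s m| ^+ 2 <= 1 by rewrite expr_le1 //.
  nra.
have mono n m : (n <= m)%N -> ee m <= ee n.
  by move=> h; rewrite /ee lef_pV2 ?posrE ?ltr0Sn // ler_nat ltnS.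
have hc : cauchy_ex (s @ \oo).
  move=> e e0.
  set N := Num.truncn (8 / e ^+ 2).
  exists (s N). exists N => // n /= hn.
  rewrite -ball_normE /ball_ /=.
  have h8 : 8 / e ^+ 2 < N.+1%:R := truncnS_gt _.
  have e20 : 0 < e ^+ 2 by rewrite exprn_gt0.
  have h8' : 8 < N.+1%:R * e ^+ 2 by rewrite -ltr_pdivrMr.
  have hN1 : ee N * N.+1%:R = 1 by rewrite /ee mulVf // pnatr_eq0.
  have := mono _ _ hn. have := est N n. have := einv N. have := einv n.
  have hN : ee N * 8 < e ^+ 2.
    have := einv N; move: h8' hN1; nra.
  move=> h1 h2 h3 h4.
  have hd : `|s N - s n| ^+ 2 < e ^+ 2 by nra.
  have := normr_ge0 (s N - s n). nra.
have hcv : cvg (s @ \oo) by apply: cauchy_cvg; exact: cauchy_exP.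
set u := lim (s @ \oo) in hcv.
have hu : forall e, 0 < e -> \forall t \near \oo, `|u - s t| < e by move/cvgrPdist_lt: hcv.
have key e : 0 < e -> `|u| <= 1 + 2 * e /\ 1 - 2 * e <= phi u.
  move=> e0; have [N0 _ hN0] := hu e e0.
  set n := maxn N0 (Num.truncn e^-1).
  have hn : `|u - s n| < e by apply: hN0; rewrite /= leq_maxl.
  have hen : ee n < e.
    apply: le_lt_trans (mono _ _ (leq_maxr N0 _)) _.
    have := truncnS_gt e^-1.
    rewrite /ee -[X in _ < X]invrK ltf_pV2 ?posrE ?invr_gt0 ?ltr0Sn //.
  have [h1 h2] := hs n.
  have t1 : `|u| <= `|s n| + `|u - s n|.
    by rewrite -[X in `|X|](subrKC (s n)) ler_normD.
  have t2 := phiB (u - s n). rewrite phiBD in t2.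
  move: t2; rewrite ler_norml => /andP[t2 _].
  split; lra.
have hu1 : `|u| <= 1.
  apply/ler_addgt0Pr => e e0. have [k _] := key (e / 2) (divr_gt0 e0 (ltr0Sn _ 1)).
  lra.
have hu2 : 1 <= phi u.
  apply/ler_addgt0Pr => e e0. have [_ k] := key (e / 2) (divr_gt0 e0 (ltr0Sn _ 1)).
  lra.
have hpu : phi u = 1 by have := phile u; lra.
have hnu : `|u| = 1 by have := phile u; lra.
have huu : ip u u = 1 by rewrite -(ip_norm2 hip) hnu expr1n.
have horth z : ip z u = 0 -> phi z = 0.
  move=> hz. set c := phi z. set n2 := `|z| ^+ 2.
  have n20 : 0 <= n2 by rewrite /n2 sqr_ge0.
  set ep := (n2 + 1)^-1.
  have ep0 : 0 < ep by rewrite /ep invr_gt0; lra.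
  have epn : ep * (n2 + 1) = 1 by rewrite /ep mulVf //; lra.
  have h1 := phile (1 *: u + (c * ep) *: z).
  rewrite phiD !phiZ hpu -/c in h1.
  have h2 := norm_comb2 hip 1 (c * ep) u z.
  rewrite hnu (ipC hip u z) hz -/n2 in h2.
  have hpos : 0 <= 1 * 1 + c * ep * c.
    have : 0 <= c * c * ep by apply: mulr_ge0; [rewrite -expr2 sqr_ge0 | exact: ltW].
    lra.
  have h3 : (1 * 1 + c * ep * c) ^+ 2 <= `|1 *: u + (c * ep) *: z| ^+ 2.
    by rewrite ler_pXn2r // ?nnegrE //; lra.
  rewrite h2 in h3.
  set K := 2 + c ^+ 2 * ep - ep * n2.
  have hK : 1 <= K.
    have : 0 <= c ^+ 2 * ep by rewrite mulr_ge0 ?sqr_ge0 // ltW.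
    rewrite /K; nra.
  have hK2 : c ^+ 2 * ep * K <= 0 by rewrite /K; nra.
  have hc2 : c ^+ 2 * ep <= 0.
    have : 0 <= c ^+ 2 * ep by rewrite mulr_ge0 ?sqr_ge0 // ltW.
    nra.
  have : c ^+ 2 <= 0 by nra.
  move=> hc2z; apply/eqP; rewrite -sqrf_eq0 eq_le hc2z sqr_ge0 //.
exists u; split => // x.
have hr : ip (x - ip x u *: u) u = 0.
  by rewrite (ipBl hip) (ipZl hip) huu mulr1 subrr.
have := horth _ hr. rewrite phiBD phiZ hpu mulr1. lra.
Qed.
End Riesz.

Section Ygeom.
Variable R : realType.
Variable Y : normedModType R.

Definition indep (p q : Y) := forall a b : R, a *: p + b *: q = 0 -> a = 0 /\ b = 0.

Lemma comb_expand (e1 e2 : Y) a b p1 p2 q1 q2 :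
  a *: (p1 *: e1 + p2 *: e2) + b *: (q1 *: e1 + q2 *: e2) =
  (a * p1 + b * q1) *: e1 + (a * p2 + b * q2) *: e2.
Proof.
rewrite !scalerDr !scalerA !scalerDl.
by rewrite addrACA.
Qed.

Lemma coord_unique (p q : Y) a b a' b' : indep p q ->
  a *: p + b *: q = a' *: p + b' *: q -> a = a' /\ b = b'.
Proof.
move=> hi e.
have : (a - a') *: p + (b - b') *: q = 0.
  by rewrite !scalerBl addrACA e addrACA !subrr addr0.
by move/hi => [/eqP h1 /eqP h2]; move: h1 h2; rewrite !subr_eq0 => /eqP -> /eqP ->.
Qed.

Lemma two_span (p q : Y) : dim_eq2 Y -> indep p q ->
  forall y, exists a b, y = a *: p + b *: q.
Proof.
move=> [e1 [e2 [hi hs]]] hpq y.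
have [p1 [p2 hp]] := hs p. have [q1 [q2 hq]] := hs q. have [y1 [y2 hy]] := hs y.
have E a b : a *: p + b *: q = (a * p1 + b * q1) *: e1 + (a * p2 + b * q2) *: e2.
  by rewrite hp hq comb_expand.
set D := p1 * q2 - p2 * q1.
have [D0|D0] := eqVneq D 0.
  exfalso.
  have h1 : q2 *: p + (- p2) *: q = 0.
    rewrite E (_ : q2 * p1 + - p2 * q1 = D); last by rewrite /D; ring.
    by rewrite D0 (_ : q2 * p2 + - p2 * q2 = 0) ?scale0r ?addr0 //; ring.
  have h2 : q1 *: p + (- p1) *: q = 0.
    rewrite E (_ : q1 * p2 + - p1 * q2 = - D); last by rewrite /D; ring.
    by rewrite D0 oppr0 (_ : q1 * p1 + - p1 * q1 = 0) ?scale0r ?addr0 //; ring.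
  have [_ a2] := hpq _ _ h1. have [_ b2] := hpq _ _ h2.
  have ep2 : p2 = 0 by apply/eqP; rewrite -oppr_eq0 a2.
  have ep1 : p1 = 0 by apply/eqP; rewrite -oppr_eq0 b2.
  have p0 : p = 0 by rewrite hp ep1 ep2 !scale0r addr0.
  have h0 : 1 *: p + 0 *: q = 0 by rewrite p0 scaler0 scale0r addr0.
  have [h _] := hpq _ _ h0.
  by move/eqP: h; rewrite oner_eq0.
exists ((y1 * q2 - y2 * q1) / D), ((y2 * p1 - y1 * p2) / D).
rewrite E hy; congr (_ *: _ + _ *: _); rewrite /D; field; exact: D0.
Qed.

Lemma strict_comb (p q : Y) t : strictly_convex Y ->
  `|p| <= 1 -> `|q| <= 1 -> 0 < t < 1 -> `|t *: p + (1 - t) *: q| = 1 -> p = q.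
Proof.
move=> hsc hp hq /andP[t0 t1] hn.
have hle : `|t *: p + (1 - t) *: q| <= t * `|p| + (1 - t) * `|q|.
  apply: le_trans (ler_normD _ _) _.
  by rewrite !normrZ !ger0_norm //; lra.
have hp1 : `|p| = 1 by nra.
have hq1 : `|q| = 1 by nra.
apply/eqP; apply/negPn/negP => hpq.
have hm := hsc _ _ hp1 hq1 hpq.
set m := 2%:R^-1 *: (p + q) in hm.
have [tl|tg] := lerP t (2%:R^-1).
  have e : t *: p + (1 - t) *: q = (2 * t) *: m + (1 - 2 * t) *: q.
    rewrite /m scalerA (_ : 2 * t * 2%:R^-1 = t); last by field.
    by rewrite scalerDr -addrA -scalerDl; congr (_ + _ *: _); ring.
  have : `|t *: p + (1 - t) *: q| <= 2 * t * `|m| + (1 - 2 * t) * `|q|.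
    rewrite e; apply: le_trans (ler_normD _ _) _.
    by rewrite !normrZ !ger0_norm //; lra.
  nra.
have e : t *: p + (1 - t) *: q = (2 - 2 * t) *: m + (2 * t - 1) *: p.
  rewrite /m scalerA (_ : (2 - 2 * t) * 2%:R^-1 = 1 - t); last by field.
  rewrite scalerDr addrAC -scalerDl; congr (_ *: _ + _); ring.
have : `|t *: p + (1 - t) *: q| <= (2 - 2 * t) * `|m| + (2 * t - 1) * `|p|.
  rewrite e; apply: le_trans (ler_normD _ _) _.
  by rewrite !normrZ !ger0_norm //; lra.
nra.
Qed.

End Ygeom.

Section Smooth.
Variable R : realType.
Variable Y : normedModType R.

Lemma sfL (y0 : Y) f : support_functional y0 f -> forall a x y, f (a *: x + y) = a * f x + f y.
Proof. by move=> [lf _] a x y; rewrite lf. Qed.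

Lemma sf0 (y0 : Y) f : support_functional y0 f -> f 0 = 0.
Proof. move=> hf; have := sfL hf 1 0 0; rewrite scaler0 addr0 mul1r; lra. Qed.

Lemma sfZ (y0 : Y) f : support_functional y0 f -> forall a x, f (a *: x) = a * f x.
Proof. by move=> hf a x; rewrite -[a *: x]addr0 (sfL hf) (sf0 hf) addr0. Qed.

Lemma sfD (y0 : Y) f : support_functional y0 f -> forall x y, f (x + y) = f x + f y.
Proof. by move=> hf x y; have := sfL hf 1 x y; rewrite scale1r mul1r. Qed.

Lemma sf_bj (y0 w : Y) f : support_functional y0 f -> `|y0| = 1 -> f w = 0 -> bj_orth y0 w.
Proof.
move=> hf hy hw l; rewrite hy.
have [_ [hb h1]] := hf.
have := hb (y0 + l *: w). rewrite (sfD hf) (sfZ hf) hw h1 mulr0 addr0 normr1. done.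
Qed.

Hypothesis hdim : dim_eq2 Y.

Lemma ker_exists (y0 : Y) f : support_functional y0 f -> exists w, `|w| = 1 /\ f w = 0.
Proof.
move=> hf. have [e1 [e2 [hi hs]]] := hdim.
set w' := f e2 *: e1 + (- f e1) *: e2.
have fw' : f w' = 0 by rewrite /w' (sfD hf) !(sfZ hf); ring.
have w'0 : w' != 0.
  apply/negP => /eqP /hi [a1 a2].
  have [a [b hy]] := hs y0.
  have := hf.2.2; rewrite hy (sfD hf) !(sfZ hf) a1.
  have -> : f e1 = 0 by rewrite -[f e1]opprK a2 oppr0.
  by rewrite !mulr0 addr0 => /eqP; rewrite eq_sym oner_eq0.
exists (`|w'|^-1 *: w'); split.
  by rewrite normrZ normfV normr_id mulVf // normr_eq0.
by rewrite (sfZ hf) fw' mulr0.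
Qed.

Lemma line (y0 w v : Y) f : support_functional y0 f ->
  (forall g, support_functional y0 g -> forall y, g y = f y) ->
  `|y0| = 1 -> bj_orth y0 w -> `|w| = 1 -> f v = 0 -> exists b, v = b *: w.
Proof.
move=> hf huniq hy hbj hw hv.
have hind : indep y0 w.
  move=> a b e.
  have [a0|a0] := eqVneq a 0.
    move: e; rewrite a0 scale0r add0r => /eqP; rewrite scaler_eq0 => /orP[/eqP -> //|].
    by rewrite -normr_eq0 hw oner_eq0.
  exfalso.
  have := hbj (b / a). rewrite hy.
  have -> : y0 + (b / a) *: w = a^-1 *: (a *: y0 + b *: w).
    by rewrite scalerDr !scalerA mulVf // scale1r mulrC.
  by rewrite e scaler0 normr0 ler10.
have hsp := two_span hdim hind.
have /choice [al hal] : forall y, exists a, exists b, y = a *: y0 + b *: w.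
  by move=> y; have [a [b h]] := hsp y; exists a, b.
have /choice [ga hga] : forall y, exists b, y = al y *: y0 + b *: w by [].
have hg : support_functional y0 al.
  split; [|split].
  - move=> a x y.
    have E : a *: x + y = (a * al x + al y) *: y0 + (a * ga x + ga y) *: w.
      by rewrite {1}(hga x) {1}(hga y) scalerDr !scalerA addrACA -!scalerDl.
    have [h _] := coord_unique hind (etrans (esym (hga _)) E).
    by rewrite h.
  - move=> y.
    have [a0|a0] := eqVneq (al y) 0; first by rewrite a0 normr0.
    have ey : y = al y *: (y0 + (ga y / al y) *: w).
      by rewrite {1}(hga y) scalerDr scalerA mulrCA mulfV // mulr1.
    rewrite [in X in _ <= X]ey normrZ -{1}[`|al y|]mulr1. apply: ler_wpM2l => //.
    by rewrite -hy; apply: hbj.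
  - have e : y0 = 1 *: y0 + 0 *: w by rewrite scale1r scale0r addr0.
    have [h _] := coord_unique hind (etrans (esym (hga _)) e).
    exact: h.
have := huniq _ hg v; rewrite hv => h0.
by exists (ga v); rewrite {1}(hga v) h0 scale0r add0r.
Qed.

End Smooth.

Section Ops.
Variable R : realType.
Variables H Y : normedModType R.

Lemma combZ (p q : Y) c a b : c *: (a *: p + b *: q) = (c * a) *: p + (c * b) *: q.
Proof. by rewrite scalerDr !scalerA. Qed.
Lemma combD (p q : Y) a b a' b' :
  (a *: p + b *: q) + (a' *: p + b' *: q) = (a + a') *: p + (b + b') *: q.
Proof. by rewrite addrACA -!scalerDl. Qed.

Variable A : H -> Y.
Hypothesis lA : linear A.

Lemma lin0 : A 0 = 0.
Proof. have := lA 1 0 0; rewrite scaler0 addr0 scale1r => h. by apply: (addrI (A 0)); rewrite addr0 -h. Qed.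
Lemma linZ c x : A (c *: x) = c *: A x.
Proof. by have := lA c x 0; rewrite !addr0 lin0 addr0. Qed.
Lemma linD x y : A (x + y) = A x + A y.
Proof. by have := lA 1 x y; rewrite !scale1r. Qed.
Lemma linN x : A (- x) = - A x.
Proof. by rewrite -scaleN1r linZ scaleN1r. Qed.
Lemma linB x y : A (x - y) = A x - A y.
Proof. by rewrite linD linN. Qed.

End Ops.

Section Opnorm.
Variable R : realType.
Variables H Y : normedModType R.
Variable A : H -> Y.
Hypothesis bA : bounded_op A.

Let hub : has_ubound [set `|A x| | x in [set x : H | `|x| <= 1]].
Proof.
have [_ [k hk]] := bA. exists `|k| => r [x /= hx <-].
apply: le_trans (hk x) _. apply: le_trans (ler_norm _) _.
rewrite normrM normr_id -{2}[`|k|]mulr1. by apply: ler_wpM2l => //.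
Qed.

Let hne : [set `|A x| | x in [set x : H | `|x| <= 1]] !=set0.
Proof. by exists `|A 0|, 0 => //=; rewrite normr0. Qed.

Lemma opnorm_le x : `|A x| <= opnorm A * `|x|.
Proof.
have lA := bA.1.
have [->|x0] := eqVneq x 0; first by rewrite (lin0 lA) !normr0 mulr0.
have nx : 0 < `|x| by rewrite normr_gt0.
set x' := `|x|^-1 *: x.
have hx' : `|x'| <= 1 by rewrite normrZ normfV normr_id mulVf ?gt_eqF.
have := ub_le_sup hub (ex_intro2 _ _ x' hx' erefl).
rewrite /x' (linZ lA) normrZ normfV normr_id -/(opnorm A).
by rewrite ler_pdivrMl // mulrC.
Qed.

Lemma opnorm_adh e : 0 < e -> exists x, `|x| <= 1 /\ opnorm A - e < `|A x|.
Proof.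
move=> e0. have [r [x hx <-] hr] := sup_adherent e0 (conj hne hub).
by exists x.
Qed.

Lemma opnorm_ub c : (forall x, `|x| <= 1 -> `|A x| <= c) -> opnorm A <= c.
Proof. by move=> h; apply: ge_sup hne _ => r [x hx <-]; apply: h. Qed.

Lemma opnorm_ge0 : 0 <= opnorm A.
Proof.
apply: le_trans (ub_le_sup hub (ex_intro2 _ _ 0 _ erefl)).
- by [].
- by rewrite /= normr0.
Qed.

End Opnorm.

Lemma exists_orth (R : realType) (H : normedModType R) (ip : H -> H -> R)
  (hip : is_inner_product ip) (u : H) :
  `|u| = 1 -> dim_ge2 H -> exists z, `|z| = 1 /\ ip z u = 0.
Proof.
move=> hu [p [q hpq]].
have huu : ip u u = 1 by rewrite -(ip_norm2 hip) hu expr1n.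
suff [z [z0 hz]] : exists z, z != 0 /\ ip z u = 0.
  exists (`|z|^-1 *: z); split; first by rewrite normrZ normfV normr_id mulVf // normr_eq0.
  by rewrite (ipZl hip) hz mulr0.
have orth x : ip (x - ip x u *: u) u = 0 by rewrite (ipBl hip) (ipZl hip) huu mulr1 subrr.
have [p0|p0] := eqVneq (p - ip p u *: u) 0; last by exists (p - ip p u *: u).
have [q0|q0] := eqVneq (q - ip q u *: u) 0; last by exists (q - ip q u *: u).
exfalso.
move/eqP: p0; rewrite subr_eq0 => /eqP ep. move/eqP: q0; rewrite subr_eq0 => /eqP eq.
have h : ip q u *: p + (- ip p u) *: q = 0.
  rewrite [in X in X + _]ep [in X in _ + X]eq !scalerA mulNr scaleNr (mulrC (ip p u)).
  by rewrite subrr.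
have [_ b] := hpq _ _ h.
have p0 : p = 0 by rewrite ep -[ip p u]opprK b oppr0 scale0r.
have h1 : 1 *: p + 0 *: q = 0 by rewrite p0 scaler0 scale0r addr0.
have [e _] := hpq _ _ h1.
by move/eqP: e; rewrite oner_eq0.
Qed.

Lemma orth_unit1 (R : realType) (H : normedModType R) (ip : H -> H -> R)
  (hip : is_inner_product ip) (u z : H) a b :
  `|u| = 1 -> `|z| = 1 -> ip u z = 0 -> a ^+ 2 + b ^+ 2 = 1 -> `|a *: u + b *: z| = 1.
Proof.
move=> hu hz huz hab. have := orth_unit hip a b hu hz huz. rewrite hab => h.
by apply/eqP; rewrite -sqrp_eq1 // h.
Qed.

Lemma sq_lt (R : realType) (x r : R) : 0 <= x -> 0 < r -> x ^+ 2 < r ^+ 2 -> x < r.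
Proof. move=> x0 r0 h; nra. Qed.

Lemma sq_le (R : realType) (x r : R) : 0 <= x -> 0 <= r -> x ^+ 2 <= r ^+ 2 -> x <= r.
Proof. move=> x0 r0 h; nra. Qed.

Unset Implicit Arguments.

Theorem mainTheorem9 (R : realType) (H Y : completeNormedModType R)
  (ip : H -> H -> R) (T : H -> Y) :
  is_inner_product ip -> dim_ge2 H ->
  dim_eq2 Y -> smooth Y -> strictly_convex Y ->
  bounded_op T -> rank_one T -> opnorm T = 1 ->
  exists x : H, `|x| = 1 /\ MT T = [set x; - x] /\
    (extreme_contraction T <-> ~ CPP x (T x)).
Proof.
move=> hip hd2 hdY hsm hsc bT [[y0 [y00 hy0]] _] hT1.
have lT := bT.1.
have /choice [c hc] := hy0.
have ny0 : 0 < `|y0| by rewrite normr_gt0.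
have [Y0 hY0d] : exists Y0, Y0 = `|y0|^-1 *: y0 by eexists.
have hY0 : `|Y0| = 1 by rewrite hY0d normrZ normfV normr_id mulVf // gt_eqF.
have Y00 : Y0 != 0 by rewrite -normr_eq0 hY0 oner_eq0.
pose phi x := c x * `|y0|.
have hTphi x : T x = phi x *: Y0.
  by rewrite /phi hY0d scalerA -mulrA mulfV ?gt_eqF // mulr1 hc.
have sinj a b : a *: Y0 = b *: Y0 -> a = b.
  move=> /eqP; rewrite -subr_eq0 -scalerBl scaler_eq0 (negbTE Y00) orbF subr_eq0.
  by move/eqP.
have phiL a x y : phi (a *: x + y) = a * phi x + phi y.
  apply: sinj; rewrite -hTphi (lT a x y) !hTphi scalerDl scalerA.
  done.
have nT x : `|T x| = `|phi x| by rewrite hTphi normrZ hY0 mulr1.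
have phiB x : `|phi x| <= `|x|.
  by rewrite -nT; have := opnorm_le bT x; rewrite hT1 mul1r.
have phi0 : phi 0 = 0 by have := phiL 1 0 0; rewrite scaler0 addr0 mul1r; lra.
have phiN x : phi (- x) = - phi x.
  by have := phiL (-1) x 0; rewrite addr0 scaleN1r phi0 addr0 mulN1r.
have phiS e : 0 < e -> exists x, `|x| <= 1 /\ 1 - e < phi x.
  move=> e0; have [x [hx hlt]] := opnorm_adh bT e0.
  rewrite hT1 nT in hlt.
  have [p0|p0] := lerP 0 (phi x).
    by exists x; split => //; rewrite ger0_norm in hlt.
  exists (- x); split; first by rewrite normrN.
  by rewrite phiN; rewrite ltr0_norm in hlt.
have [u [hu hphiu]] := riesz hip phiL phiB phiS.
have hTx x : T x = ip x u *: Y0 by rewrite hTphi hphiu.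
have huu : ip u u = 1 by rewrite -(ip_norm2 hip) hu expr1n.
have hTu : T u = Y0 by rewrite hTx huu scale1r.
exists u; split => //; split.
  apply/seteqP; split => x /=.
    move=> [hx1 hTx1]; rewrite hT1 hTx normrZ hY0 mulr1 in hTx1.
    set a := ip x u in hTx1.
    have a2 : a ^+ 2 = 1 by rewrite -real_normK ?num_real // hTx1 expr1n.
    have hz : `|x - a *: u| ^+ 2 = 0.
      have := norm_comb2 hip 1 (- a) x u.
      rewrite scale1r scaleNr hx1 hu -/a => ->. 
      rewrite expr1n. nra.
    move/eqP: hz; rewrite sqrf_eq0 normr_eq0 subr_eq0 => /eqP ->.
    move/eqP: a2; rewrite sqrf_eq1 => /orP[/eqP ->|/eqP ->]; first by left; rewrite scale1r.
    by right; rewrite scaleN1r.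
  move=> [->|->]; split; rewrite ?normrN // hT1 hTx ?(ipNl hip) huu normrZ hY0 mulr1 ?normrN normr1 //.
have [f [hf huniq]] := hsm Y0 hY0.
have NE : forall (A B : H -> Y) t x1, in_unit_ball_op A -> in_unit_ball_op B ->
    0 < t < 1 -> (forall x, T x = t *: A x + (1 - t) *: B x) -> A x1 <> T x1 ->
    CPP u Y0.
  move=> A B t x1 [bA hA1] [bB hB1] /andP[t0 t1] hT A1.
  have lA := bA.1.
  have hAb x : `|A x| <= `|x|.
    apply: le_trans (opnorm_le bA x) _. rewrite -{2}[`|x|]mul1r.
    by apply: ler_wpM2r.
  have hBb x : `|B x| <= `|x|.
    apply: le_trans (opnorm_le bB x) _. rewrite -{2}[`|x|]mul1r.
    by apply: ler_wpM2r.
  have hAu : A u = Y0.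
    have e : `|t *: A u + (1 - t) *: B u| = 1 by rewrite -hT hTu.
    have hA' := hAb u; rewrite hu in hA'.
    have hB' := hBb u; rewrite hu in hB'.
    have ab := strict_comb hsc hA' hB' (introT andP (conj t0 t1)) e.
    by rewrite -hTu hT -ab -scalerDl subrKC scale1r.
  have [z1 hz1d] : exists z1, z1 = x1 - ip x1 u *: u by eexists.
  have Az1 : A z1 = A x1 - T x1 by rewrite hz1d (linB lA) (linZ lA) hAu hTx.
  have Az10 : A z1 != 0 by rewrite Az1 subr_eq0; apply/eqP.
  have z10 : z1 != 0 by apply: contraNneq Az10 => ->; rewrite (lin0 lA).
  have nz1 : 0 < `|z1| by rewrite normr_gt0.
  have [z hzd] : exists z, z = `|z1|^-1 *: z1 by eexists.
  have hz1 : `|z| = 1 by rewrite hzd normrZ normfV normr_id mulVf // gt_eqF.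
  have hzu : ip z u = 0.
    by rewrite hzd (ipZl hip) hz1d (ipBl hip) (ipZl hip) huu mulr1 subrr mulr0.
  have huz : ip u z = 0 by rewrite (ipC hip).
  have [v hvd] : exists v, v = A z by eexists.
  have v0 : v != 0.
    by rewrite hvd hzd (linZ lA) scaler_eq0 negb_or invr_eq0 normr_eq0 z10.
  have [k hkd] : exists k, k = t / (1 - t) by eexists.
  have k0 : 0 < k by rewrite hkd divr_gt0 // subr_gt0.
  have hAx a b : A (a *: u + b *: z) = a *: Y0 + b *: v.
    by rewrite (linD lA) !(linZ lA) hAu hvd.
  have hTab a b : T (a *: u + b *: z) = a *: Y0 + 0 *: v.
    by rewrite hTx (ipDl hip) !(ipZl hip) huu hzu mulr1 mulr0 addr0 scale0r addr0.
  have hBx a b : B (a *: u + b *: z) = a *: Y0 + (- (k * b)) *: v.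
    have e := hT (a *: u + b *: z). rewrite hTab hAx in e.
    have : (1 - t) *: B (a *: u + b *: z) = (1 - t) *: (a *: Y0 + (- (k * b)) *: v).
      apply: (addrI (t *: (a *: Y0 + b *: v))). rewrite -e !combZ !combD.
      by congr (_ *: _ + _ *: _); rewrite ?hkd; field; rewrite // subr_eq0 (gt_eqF t1).
    move/(congr1 (fun y => (1 - t)^-1 *: y)).
    by rewrite !scalerA mulVf ?scale1r // subr_eq0 (gt_eqF t1).
  have hA' a b : a ^+ 2 + b ^+ 2 = 1 -> `|a *: Y0 + b *: v| <= 1.
    by move=> hab; rewrite -hAx -(orth_unit1 hip (a:=a) (b:=b) hu hz1 huz hab).
  have hB' a b : a ^+ 2 + b ^+ 2 = 1 -> `|a *: Y0 + (- (k * b)) *: v| <= 1.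
    by move=> hab; rewrite -hBx -(orth_unit1 hip (a:=a) (b:=b) hu hz1 huz hab).
  have fv : f v = 0.
    have [cc hcc] : exists cc, cc = f v by eexists.
    have [rh hrh] : exists rh, rh = Num.sqrt (1 + cc ^+ 2) by eexists.
    have cc2 : 0 <= cc ^+ 2 := sqr_ge0 cc.
    have rh0 : 0 < rh by rewrite hrh sqrtr_gt0; lra.
    have rr : rh ^+ 2 = 1 + cc ^+ 2 by rewrite hrh sqr_sqrtr //; lra.
    have hab : (1 / rh) ^+ 2 + (cc / rh) ^+ 2 = 1.
      by rewrite !expr_div_n -mulrDl rr expr1n divff // gt_eqF // -rr exprn_gt0.
    have h1 := hA' _ _ hab.
    have h2 := hf.2.1 ((1 / rh) *: Y0 + (cc / rh) *: v).
    rewrite (sfD hf) !(sfZ hf) hf.2.2 -hcc in h2.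
    have e : 1 / rh * 1 + cc / rh * cc = rh.
      by apply: (mulIf (negbT (gt_eqF rh0))); rewrite -expr2 rr; field; rewrite gt_eqF.
    rewrite e gtr0_norm // in h2.
    have : rh <= 1 by apply: le_trans h2 h1.
    move=> hr1.
    have : cc ^+ 2 <= 0 by nra.
    move=> hc0; rewrite -hcc; apply/eqP; rewrite -sqrf_eq0 eq_le hc0 sqr_ge0 //.
  split => //; split => //.
  have [m hmd] : exists m, m = Num.min 1 k by eexists.
  have m0 : 0 < m by rewrite hmd lt_min ltr01 k0.
  have m1 : m <= 1 by rewrite hmd ge_min lexx.
  have mk : m <= k by rewrite hmd ge_min lexx orbT.
  have nv : 0 < `|v| by rewrite normr_gt0.
  exists 1, (m * `|v|); split; first exact: ltr01.
  split; first exact: mulr_gt0.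
  move=> z' w a b hbz' hz'1 hbw hw1 [_ hsph].
  have huz' : ip u z' = 0 := bj_ip hip hu hz'1 hbz'.
  have hab : a ^+ 2 + b ^+ 2 = 1.
    have := orth_unit hip a b hu hz'1 huz'. move=> h; rewrite -h.
    by move: hsph; rewrite /sphere /= => ->; rewrite expr1n.
  have [be hbe] := line hdY hf huniq hY0 hbw hw1 fv.
  have be0 : be != 0 by apply: contraNneq v0 => e; rewrite hbe e scale0r.
  have hbev : `|be| = `|v| by rewrite hbe normrZ hw1 mulr1.
  have [s hsd] : exists s, s = m * `|v| / be by eexists.
  have hs : `|s| = m.
    rewrite hsd normrM normfV (gtr0_norm (mulr_gt0 m0 nv)) hbev mulfK //.
    by rewrite gt_eqF.
  have : - m <= s <= m by rewrite -ler_norml hs.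
  move/andP => [sl sr].
  have [la hla] : exists la, la = (s + k) / (1 + k) by eexists.
  have k1 : 0 < 1 + k by lra.
  have la0 : 0 <= la by rewrite hla divr_ge0 //; lra.
  have la1 : la <= 1 by rewrite hla ler_pdivrMr // mul1r; lra.
  have sbe : m * `|v| = s * be by rewrite hsd divfK.
  have e : a *: Y0 + (b * (m * `|v|)) *: w =
      la *: (a *: Y0 + (b * be) *: w) + (1 - la) *: (a *: Y0 + (- (k * b) * be) *: w).
    rewrite !combZ combD; congr (_ *: _ + _ *: _); first by ring.
    by rewrite sbe hla; field; rewrite gt_eqF.
  have hX : a *: Y0 + (b * be) *: w = a *: Y0 + b *: v by rewrite hbe scalerA.
  have hX' : a *: Y0 + (- (k * b) * be) *: w = a *: Y0 + (- (k * b)) *: v.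
    by rewrite hbe scalerA.
  rewrite e hX hX'. apply: le_trans (ler_normD _ _) _.
  have la1' : 0 <= 1 - la by lra.
  rewrite !normrZ (ger0_norm la0) (ger0_norm la1').
  have := hA' a b hab; have := hB' a b hab. nra.
rewrite hTu; split.
- move=> hext [_ [_ [r [mu [r0 [mu0 hcpp]]]]]].
  have [z [hz1 hzu]] := exists_orth hip hu hd2.
  have huz : ip u z = 0 by rewrite (ipC hip).
  have hbz : bj_orth u z := ip_bj hip huz.
  have hzz : ip z z = 1 by rewrite -(ip_norm2 hip) hz1 expr1n.
  have [w0 [hw1 fw0]] := ker_exists hdY hf.
  have hbw : bj_orth Y0 w0 := sf_bj hf hY0 fw0.
  have hbw' : bj_orth Y0 (- w0).
    by apply: (sf_bj hf hY0); rewrite -scaleN1r (sfZ hf) fw0 mulr0.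
  set ep := Num.min mu (r ^+ 2 / 2).
  have ep0 : 0 < ep by rewrite lt_min mu0 divr_gt0 // exprn_gt0.
  have epmu : ep <= mu by rewrite ge_min lexx.
  have epr : ep <= r ^+ 2 / 2 by rewrite ge_min lexx orbT.
  have CA a b : a ^+ 2 + b ^+ 2 = 1 -> (a - 1) ^+ 2 + b ^+ 2 < r ^+ 2 ->
      `|a *: Y0 + (b * ep) *: w0| <= 1.
    move=> hab hr.
    have hs : (oball u r `&` sphere (V:=H)) (a *: u + b *: z).
      split; last exact: (orth_unit1 hip hu hz1 huz hab).
      rewrite /oball /=.
      have -> : a *: u + b *: z - u = (a - 1) *: u + b *: z.
        by rewrite scalerBl scale1r addrAC.
      by apply: sq_lt => //; rewrite (orth_unit hip _ _ hu hz1 huz).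
    have h1 := hcpp z w0 a b hbz hz1 hbw hw1 hs.
    have nw : `|- w0| = 1 by rewrite normrN.
    have h2 := hcpp z (- w0) a b hbz hz1 hbw' nw hs.
    have q0 : 0 < ep / mu by rewrite divr_gt0.
    have q1 : ep / mu <= 1 by rewrite ler_pdivrMr // mul1r.
    have [la hla] : exists la, la = (1 + ep / mu) / 2 by eexists.
    have e : a *: Y0 + (b * ep) *: w0 =
        la *: (a *: Y0 + (b * mu) *: w0) + (1 - la) *: (a *: Y0 + (b * mu) *: (- w0)).
      rewrite scalerN -scaleNr !combZ combD; congr (_ *: _ + _ *: _); rewrite hla.
        by ring.
      by field; rewrite gt_eqF.
    rewrite e; apply: le_trans (ler_normD _ _) _.
    have la0 : 0 <= la by rewrite hla; lra.
    have la1 : 0 <= 1 - la by rewrite hla; lra.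
    rewrite !normrZ (ger0_norm la0) (ger0_norm la1). nra.
  have C1 a b : a ^+ 2 + b ^+ 2 = 1 -> `|a *: Y0 + (b * ep) *: w0| <= 1.
    move=> hab.
    have [hr|hr] := ltrP ((a - 1) ^+ 2 + b ^+ 2) (r ^+ 2); first exact: CA.
    have [hr'|hr'] := ltrP ((a + 1) ^+ 2 + b ^+ 2) (r ^+ 2).
      have hab' : (- a) ^+ 2 + (- b) ^+ 2 = 1 by rewrite !sqrrN.
      have := CA (- a) (- b) hab'.
      rewrite (_ : (- a - 1) = - (a + 1)); last by ring.
      rewrite !sqrrN => /(_ hr').
      by rewrite !scaleNr mulNr scaleNr -opprD normrN.
    have ha : `|a| <= 1 - r ^+ 2 / 2 by rewrite ler_norml; apply/andP; split; nra.
    have hb : `|b| <= 1 by rewrite ler_norml; apply/andP; split; nra.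
    apply: le_trans (ler_normD _ _) _.
    rewrite !normrZ hY0 hw1 !mulr1 (ger0_norm (ltW ep0)).
    have := normr_ge0 b. nra.
  have C2 a b rho : 0 <= rho -> a ^+ 2 + b ^+ 2 <= rho ^+ 2 ->
      `|a *: Y0 + (b * ep) *: w0| <= rho.
    move=> rho0 hab.
    set s := a ^+ 2 + b ^+ 2.
    have s0 : 0 <= s by rewrite /s addr_ge0 ?sqr_ge0.
    have [sz|sp] := eqVneq s 0.
      have a0 : a = 0 by apply/eqP; rewrite -sqrf_eq0 eq_le sqr_ge0 andbT; move: sz; rewrite /s; have := sqr_ge0 b; lra.
      have b0 : b = 0 by apply/eqP; rewrite -sqrf_eq0 eq_le sqr_ge0 andbT; move: sz; rewrite /s a0; have := sqr_ge0 b; lra.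
      by rewrite a0 b0 mul0r !scale0r addr0 normr0.
    have sp' : 0 < s by rewrite lt_def sp.
    have [q hqd] : exists q, q = Num.sqrt s by eexists.
    have q0 : 0 < q by rewrite hqd sqrtr_gt0.
    have qq : q ^+ 2 = a ^+ 2 + b ^+ 2 by rewrite hqd sqr_sqrtr.
    have e : a *: Y0 + (b * ep) *: w0 = q *: ((a / q) *: Y0 + ((b / q) * ep) *: w0).
      by rewrite combZ; congr (_ *: _ + _ *: _); field; rewrite gt_eqF.
    rewrite e normrZ gtr0_norm //.
    have h1 : (a / q) ^+ 2 + (b / q) ^+ 2 = 1.
      by rewrite !expr_div_n -mulrDl -qq divff // gt_eqF // exprn_gt0.
    have := C1 _ _ h1.
    have : q <= rho by apply: sq_le; [exact: ltW | done | rewrite qq].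
    move=> hq hn. have := normr_ge0 ((a / q) *: Y0 + (b / q * ep) *: w0). nra.
  pose Fs (s : R) (x : H) := ip x u *: Y0 + ((s * ip x z) * ep) *: w0.
  have linF s : linear (Fs s).
    move=> a x y; rewrite /Fs !(ipZDl hip) combZ combD.
    by congr (_ *: _ + _ *: _); ring.
  have ballF s : s ^+ 2 = 1 -> in_unit_ball_op (Fs s).
    move=> s1.
    have bnd x : `|Fs s x| <= `|x|.
      apply: C2 => //. rewrite exprMn s1 mul1r. exact: (bessel hip x hu hz1 huz).
    split; first by split; [exact: linF | exists 1 => x; rewrite mul1r; exact: bnd].
    apply: opnorm_ub => x hx; exact: le_trans (bnd x) hx.
  have hTAB x : T x = (1/2) *: Fs 1 x + (1 - 1/2) *: Fs (-1) x.
    rewrite hTx /Fs !combZ combD -[X in X = _]addr0 -(scale0r w0).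
    by congr (_ *: _ + _ *: _); field.
  have ht : ((0 : R) < 1 / 2) && (1 / 2 < 1 :> R) by apply/andP; split; lra.
  have s1 : (-1 : R) ^+ 2 = 1 by rewrite sqrrN expr1n.
  have [hz' _] := hext.2.2 (Fs 1) (Fs (-1)) (1/2) (ballF 1 (expr1n _ _)) (ballF (-1) s1) ht hTAB z.
  move: hz'; rewrite /Fs hTx hzu hzz scale0r add0r !mul1r => /eqP.
  rewrite scaler_eq0 (gt_eqF ep0) /= -normr_eq0 hw1 oner_eq0.
  done.
- move=> hnc. split; first by split => //; rewrite hT1.
  split => // A B t hA hB ht hT x1.
  apply: contrapT => hne; apply: hnc.
  have [hA1|hA1] := pselect (A x1 = T x1); last exact: (NE A B t x1 hA hB ht hT hA1).
  have hB1 : B x1 <> T x1 by move=> h; apply: hne.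
  apply: (NE B A (1 - t) x1 hB hA _ _ hB1).
    by move/andP: ht => [t0 t1]; apply/andP; split; lra.
  by move=> x; rewrite hT addrC; congr (_ + _ *: _); ring.
Qed.
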